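(* Let $M$ be a $k$-connected matroid on $E$, where $k\geq 2$ and $|E|\geq \max\{3k-5,2\}$. Then $M$ has a unique tangle $\mathcal T$ of order $k$. Moreover a subset $A$ of $E$ belongs to $\mathcal T$ if and only if $|A|\leq k-2$.
   Context: For a matroid $M$ on $E$ with rank function $r$, $\lambda_M(X)=r(X)+r(E-X)-r(M)+1$. For a positive integer $l$, an $l$-separation (in Tutte's sense) is a partition $(X,Y)$ of $E$ with $|X|,|Y|\ge l$ and $\lambda_M(X)\le l$; $M$ is $k$-connected if it has no $l$-separation for any $l<k$. A tangle of order $k$ in $M$ is a collection $\mathcal T$ of subsets of $E$ such that (T1) $\lambda_M(A)<k$ for all $A\in\mathcal T$; (T2) if $\lambda_M(A)\le k-1$ then $A\in\mathcal T$ or $E-A\in\mathcal T$; (T3) $A\cup B\cup C\ne E$ for all $A,B,C\in\mathcal T$; (T4) $E-\{e\}\notin\mathcal T$ for each $e\in E$. *)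

(* Defs.v *)
From mathcomp Require Import all_boot.
Set Implicit Arguments. Unset Strict Implicit. Unset Printing Implicit Defensive.

Definition matroid_rank (E : finType) (r : {set E} -> nat) : Prop :=
  [/\ forall X : {set E}, r X <= #|X|,
      forall X Y : {set E}, X \subset Y -> r X <= r Y
    & forall X Y : {set E}, r (X :|: Y) + r (X :&: Y) <= r X + r Y].

(* connectivity function lambda_M(X) = r(X) + r(E-X) - r(M) + 1
   (no truncation occurs for a matroid rank function, by submodularity) *)
Definition lambdaM (E : finType) (r : {set E} -> nat) (X : {set E}) : nat :=
  r X + r (~: X) - r [set: E] + 1.

Definition l_separation (E : finType) (r : {set E} -> nat) (l : nat)
  (X : {set E}) : Prop :=
  l <= #|X| /\ l <= #|~: X| /\ lambdaM r X <= l.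

Definition k_connected (E : finType) (r : {set E} -> nat) (k : nat) : Prop :=
  forall l : nat, 0 < l -> l < k -> forall X : {set E}, ~ l_separation r l X.

Definition tangle (E : finType) (r : {set E} -> nat) (k : nat)
  (T : {set {set E}}) : Prop :=
  [/\ (forall A, A \in T -> lambdaM r A < k),
      (forall A, lambdaM r A <= k - 1 -> A \in T \/ ~: A \in T),
      (forall A B C, A \in T -> B \in T -> C \in T -> A :|: B :|: C != [set: E])
    & (forall e : E, [set~ e] \notin T)].

(* Main.v *)
Require Import Defs.
From mathcomp Require Import all_boot.
From mathcomp Require Import zify.

Lemma cardU_le (E : finType) (A B : {set E}) : #|A :|: B| <= #|A| + #|B|.
Proof. rewrite cardsU; lia. Qed.

Lemma lam_le (E : finType) (r : {set E} -> nat) (A : {set E}) :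
  matroid_rank r -> lambdaM r A <= #|A| + 1.
Proof.
case=> h1 h2 _; rewrite /lambdaM.
have := h1 A; have := h2 (~: A) setT (subsetT _); lia.
Qed.

Lemma small_in (E : finType) (r : {set E} -> nat) (k : nat) T :
  matroid_rank r -> 2 <= k -> tangle r k T ->
  forall n (A : {set E}), #|A| = n -> n <= k - 2 -> A \in T.
Proof.
move=> hr hk [t1 t2 t3 t4]; elim=> [|n IH] A hA hn.
  have hl : lambdaM r A <= k - 1 by have := @lam_le _ r A hr; lia.
  case: (t2 A hl) => // hC.
  move/eqP: hA; rewrite cards_eq0 => /eqP hA0.
  move: hC; rewrite hA0 setC0 => hC.
  by have := t3 _ _ _ hC hC hC; rewrite !setUid eqxx.
have : 0 < #|A| by rewrite hA.
rewrite card_gt0 => /set0Pn [e he].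
have hB : #|A :\ e| = n by move: (cardsD1 e A); rewrite he hA; lia.
have inB := IH _ hB ltac:(lia).
have hl : lambdaM r A <= k - 1 by have := @lam_le _ r A hr; lia.
case: (t2 A hl) => // hC.
have hle : lambdaM r [set e] <= k - 1 by have := @lam_le _ r [set e] hr; rewrite cards1; lia.
have he1 : [set e] \in T.
  case: (t2 _ hle) => // hc; by have := t4 e; rewrite hc.
have := t3 _ _ _ hC inB he1.
suff -> : ~: A :|: A :\ e :|: [set e] = setT by rewrite eqxx.
apply/setP => x; rewrite !inE.
by case: (eqVneq x e) => [->|]; rewrite ?he //=; case: (x \in A).
Qed.

Theorem corollary2p4 (E : finType) (r : {set E} -> nat) (k : nat) :
  matroid_rank r -> 2 <= k -> maxn (3 * k - 5) 2 <= #|E| -> k_connected r k ->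
  exists T : {set {set E}},
    [/\ tangle r k T,
        (forall T' : {set {set E}}, tangle r k T' -> T' = T)
      & (forall A : {set E}, A \in T <-> #|A| <= k - 2)].
Proof.
move=> hr hk hE hc.
have hE1 : 3 * k - 5 <= #|E| by move: hE; rewrite geq_max => /andP[].
have hE2 : 2 <= #|E| by move: hE; rewrite geq_max => /andP[].
have sep : forall A : {set E}, lambdaM r A <= k - 1 -> #|A| <= k - 2 \/ #|~: A| <= k - 2.
  move=> A hl.
  case: (leqP #|A| (k-2)) => h1; first by left.
  case: (leqP #|~: A| (k-2)) => h2; first by right.
  exfalso; apply: (hc (k-1) ltac:(lia) ltac:(lia) A); split; [lia|split;[lia|done]].
have tT : tangle r k [set A : {set E} | #|A| <= k - 2].
  split.
  - move=> A; rewrite inE => hA; have := @lam_le _ r A hr; lia.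
  - move=> A hl; rewrite !inE; exact: sep.
  - move=> A B C; rewrite !inE => hA hB hC; apply/negP => /eqP hU.
    have := @cardU_le _ (A :|: B) C; have := @cardU_le _ A B.
    rewrite hU cardsT; lia.
  - move=> e; rewrite inE cardsC1; lia.
exists [set A : {set E} | #|A| <= k - 2]; split => //.
- move=> T' hT'; apply/setP => A; rewrite inE.
  case: (leqP #|A| (k-2)) => hA.
    by rewrite (@small_in _ r k _ hr hk hT' _ A (erefl _) hA).
  apply/negP => hin.
  case: hT' => t1 t2 t3 t4.
  have hl : lambdaM r A <= k - 1 by have := t1 A hin; lia.
  case: (sep A hl) => h; first lia.
  have hC := @small_in _ r k _ hr hk (And4 t1 t2 t3 t4) _ (~: A) (erefl _) h.
  have := t3 _ _ _ hin hC hC; by rewrite setUCr setTU eqxx.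
- by move=> A; rewrite inE.
Qed.
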